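(* Let $k\in\mathbb{N}$ and for $n\in\mathbb{N}$ let $g(n)$ denote the maximum number of edges of an induced subgraph on $n$ vertices of the rectangular grid $\mathbb{Z}^k$. Then $g(1)=0$ and, for $n\ge 2$, \[ g(n)\le\max_{\substack{n_1+n_2=n\\ n_1,n_2\ge1}}\left(\min(n_1,n_2)+g(n_1)+g(n_2)\right). \]
   Context: The rectangular grid $\mathbb{Z}^k$ is the infinite graph with vertex set $\mathbb{Z}^k$ in which two points are adjacent iff their Manhattan distance $\sum_{i=1}^k|x_i-y_i|$ equals $1$. *)

(* Defs.v *)
From HB Require Import structures.
From mathcomp Require Import all_boot all_order all_algebra.
From mathcomp Require Import finmap.
Set Implicit Arguments. Unset Strict Implicit. Unset Printing Implicit Defensive.
Import Order.TTheory GRing.Theory Num.Theory.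
Local Open Scope fset_scope.

Definition point (k : nat) := (k.-tuple int)%type.

Definition grid_adj (k : nat) (x y : point k) : bool :=
  (\sum_(i < k) `|(tnth x i - tnth y i)%R|%N)%N == 1%N.

Definition induced_edges (k : nat) (S : {fset point k}) : {fset {fset point k}} :=
  [fset [fset x; y] | x in S, y in S & grid_adj x y].

Definition num_edges (k : nat) (S : {fset point k}) : nat := #|` induced_edges S|.

(* g is the function n |-> maximum number of edges of an induced subgraph of Z^k
   on n vertices (stated as the least upper bound in nat, which is the maximum
   whenever an n-vertex set exists). *)
Definition is_max_edges_fun (k : nat) (g : nat -> nat) : Prop :=
  forall n : nat,
    (forall S : {fset point k}, #|` S| = n -> num_edges S <= g n) /\
    (forall m : nat, (forall S : {fset point k}, #|` S| = n -> num_edges S <= m) ->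
       g n <= m).

(* Main.v *)
Require Import Defs.
From mathcomp Require Import all_boot all_order all_algebra.
From mathcomp Require Import finmap zify.
Import Order.TTheory GRing.Theory Num.Theory.
Local Open Scope fset_scope.
Set Implicit Arguments. Unset Strict Implicit.

Definition gshift k (x : point k) (i : 'I_k) : point k :=
  [tuple (if j == i then tnth x j + 1 else tnth x j)%R | j < k].

Lemma adj_gshift k (x y : point k) i :
  grid_adj x y -> (tnth x i < tnth y i)%R -> y = gshift x i.
Proof.
rewrite /grid_adj (bigD1 i) //= => /eqP H lt.
have Hi : `|(tnth x i - tnth y i)%R|%N = 1%N.
  have : (0 < `|(tnth x i - tnth y i)%R|%N)%N.
    rewrite absz_gt0 subr_eq0; apply/negP => /eqP e; by rewrite e ltxx in lt.
  lia.
rewrite Hi in H.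
have H0 : (\sum_(j < k | j != i) `|(tnth x j - tnth y j)%R|%N = 0)%N.
  by apply/eqP; rewrite -(eqn_add2l 1) H addn0.
apply: eq_from_tnth => j; rewrite tnth_mktuple.
case: eqP => [->|/eqP ne].
  lia.
move/eqP: H0; rewrite sum_nat_eq0 => /forallP /(_ j); rewrite ne /= => /eqP.
lia.
Qed.
Lemma edgeP k (S : {fset point k}) e :
  reflect (exists x, exists y, [/\ x \in S, y \in S, grid_adj x y & e = [fset x; y]])
    (e \in induced_edges S).
Proof.
apply: (iffP (imfset2P _ _ _ _ _)).
  move=> [x xS [y yS ->]]; exists x, y; move: xS yS; rewrite !inE /= => xS /andP [yS a].
  by split.
move=> [x [y [xS yS a ->]]]; exists x => //.
exists y => //. by rewrite inE /=; apply/andP.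
Qed.

Lemma grid_adj_sym k (x y : point k) : grid_adj x y = grid_adj y x.
Proof.
rewrite /grid_adj; congr (_ == _); apply: eq_bigr => j _.
by rewrite -abszN opprB.
Qed.

Lemma grid_adj_irr k (x : point k) : grid_adj x x = false.
Proof.
by rewrite /grid_adj big1 // => j _; rewrite subrr.
Qed.

Lemma cardU_le (T : choiceType) (A B : {fset T}) : #|` A `|` B| <= #|` A| + #|` B|.
Proof. by rewrite cardfsU leq_subr. Qed.

Lemma two_le k (S : {fset point k}) x y :
  x \in S -> y \in S -> x != y -> 2 <= #|` S|.
Proof.
move=> xS yS ne; have <- : #|` [fset x; y]| = 2 by rewrite cardfs2 ne.
apply: fsubset_leq_card; apply/fsubsetP => z; rewrite !inE.
by case/orP => /eqP ->.
Qed.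

Lemma img_le k (f : point k -> {fset point k}) (C : {fset point k}) :
  #|` f @` C| <= #|` C|.
Proof. exact: leq_imfset_card. Qed.

Definition gshiftm k (x : point k) (i : 'I_k) : point k :=
  [tuple (if j == i then tnth x j - 1 else tnth x j)%R | j < k].

Lemma adj_shiftm k (x y : point k) i :
  grid_adj x y -> (tnth x i < tnth y i)%R -> x = gshiftm y i.
Proof.
move=> a lt; rewrite (adj_gshift a lt); apply: eq_from_tnth => j.
rewrite !tnth_mktuple; case: eqP => // _; lia.
Qed.

Section Split.
Variables (k : nat) (S : {fset point k}) (i : 'I_k) (t : int).
Let A := [fset z in S | (tnth z i <= t)%R].
Let B := S `\` A.

Lemma cross_bound (f : point k -> {fset point k}) (C : {fset point k}) :
  (forall x y, x \in A -> y \in B -> grid_adj x y -> [fset x; y] \in f @` C) ->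
  num_edges S <= #|` C| + num_edges A + num_edges B.
Proof.
move=> H.
have sub : induced_edges S `<=` (induced_edges A `|` induced_edges B) `|` f @` C.
  apply/fsubsetP => e /edgeP [x [y [xS yS a ->]]].
  have memAB : forall z, z \in S -> (z \in A) || (z \in B).
    by move=> z zS; rewrite in_fsetD zS andbT; case: (z \in A).
  rewrite !in_fsetU.
  case/orP: (memAB x xS) => xA; case/orP: (memAB y yS) => yA.
  - by rewrite (_ : _ \in induced_edges A) //; apply/edgeP; exists x, y.
  - by rewrite H ?orbT.
  - by rewrite fsetUC H ?orbT // -grid_adj_sym.
  - by rewrite (_ : _ \in induced_edges B) ?orbT //; apply/edgeP; exists x, y.
rewrite /num_edges; apply: leq_trans (fsubset_leq_card sub) _.
apply: leq_trans (cardU_le _ _) _.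
by rewrite -addnA addnC leq_add ?img_le ?cardU_le.
Qed.

Lemma AB_lt x y : x \in A -> y \in B -> (tnth x i < tnth y i)%R.
Proof.
rewrite /B /A !inE /= => /andP [_ xt] /andP [] /negP yA yS.
have : ~~ (tnth y i <= t)%R.
  apply/negP => yt; by apply: yA; apply/andP; split.
rewrite -ltNge => ty; exact: le_lt_trans xt ty.
Qed.

Lemma split_bound :
  num_edges S <= minn #|` A| #|` B| + num_edges A + num_edges B.
Proof.
case: (leqP #|` A| #|` B|) => hAB.
- apply: (cross_bound (f := fun x => [fset x; gshift x i])) => x y xA yB a.
  by apply/imfsetP; exists x => //; rewrite (adj_gshift a (AB_lt xA yB)).
- apply: (cross_bound (f := fun y => [fset gshiftm y i; y])) => x y xA yB a.
  by apply/imfsetP; exists y => //; rewrite -(adj_shiftm a (AB_lt xA yB)).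
Qed.

Lemma A_sub : A `<=` S.
Proof. by apply/fsubsetP => z; rewrite inE /= => /andP []. Qed.

Lemma card_AB : (#|` A| + #|` B|)%N = #|` S|.
Proof.
rewrite /B cardfsDS ?A_sub // subnKC //; exact: fsubset_leq_card A_sub.
Qed.

End Split.

Lemma core_bound k (g : nat -> nat) (hg : is_max_edges_fun k g) (S : {fset point k}) n
  x y i : #|` S| = n -> x \in S -> y \in S -> (tnth x i < tnth y i)%R ->
  (num_edges S <= \max_(1 <= n1 < n) (minn n1 (n - n1) + g n1 + g (n - n1)))%N.
Proof.
move=> HS xS yS lt.
set A := [fset z in S | (tnth z i <= tnth x i)%R].
set B := S `\` A.
have xA : x \in A by rewrite inE; apply/andP; split.
have yB : y \in B.
  rewrite in_fsetD yS andbT inE; apply/negP => /andP [_]; by rewrite leNgt lt.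
have cAB := card_AB S i (tnth x i).
have hB : #|` B| = n - #|` A| by rewrite -HS -cAB addKn.
have a0 : 0 < #|` A| by rewrite cardfs_gt0; apply/fset0Pn; exists x.
have b0 : 0 < #|` B| by rewrite cardfs_gt0; apply/fset0Pn; exists y.
apply: leq_trans (split_bound S i (tnth x i)) _.
apply: leq_trans (@leq_bigmax_seq _ _ xpredT _ #|` A| _ _); last first.
- by [].
- rewrite mem_index_iota a0 -HS -cAB; lia.
rewrite -hB -addnA -addnA leq_add2l leq_add //.
- exact: (hg _).1.
- exact: (hg _).1.
Qed.

Local Close Scope fset_scope.

Theorem mainTheorem13 (k : nat) (g : nat -> nat) (hg : is_max_edges_fun k g) :
  g 1 = 0 /\
  forall n : nat, 2 <= n ->
    g n <= \max_(1 <= n1 < n) (minn n1 (n - n1) + g n1 + g (n - n1)).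
Proof.
split.
  apply/eqP; rewrite -leqn0; apply: (hg 1).2 => S HS.
  rewrite leqn0 /num_edges cardfs_eq0; apply/eqP/fsetP => e; rewrite inE.
  apply/negbTE/negP => /edgeP [x [y [xS yS a _]]].
  case: (eqVneq x y) => [exy | nxy].
    by rewrite exy grid_adj_irr in a.
  by have := two_le xS yS nxy; rewrite HS.
move=> n n2; apply: (hg n).2 => S HS.
have [x xS] : exists x, x \in S.
  by apply/fset0Pn; rewrite -cardfs_gt0 HS; lia.
have [y yS nxy] : exists2 y, y \in S & y != x.
  have : 0 < #|` (S `\ x)%fset| by move: (cardfsD1 x S); rewrite xS HS; lia.
  rewrite cardfs_gt0 => /fset0Pn [y]; rewrite in_fsetD1 => /andP [h1 h2].
  by exists y.
case: (pickP (fun j => tnth x j != tnth y j)) => [j Hj | H]; last first.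
  case/negP: nxy; apply/eqP/eq_from_tnth => j.
  by move/negbFE/eqP: (H j).
rewrite neq_lt in Hj; case/orP: Hj => lt.

- have := core_bound hg HS xS yS lt. exact.
- have := core_bound hg HS yS xS lt. exact.
Qed.
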